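(* Let $C\in\mathbb{R}^{m\times k}$ with $\operatorname{rank}(C)=k$, and let $C_\ell\in\mathbb{R}^{m\times\ell}$ be a column submatrix of $C$, $1\le\ell<k$. Then $\operatorname{rvol}(C)\le\operatorname{rvol}(C_\ell)\le\operatorname{rvol}(C_1)=1$, where $C_1$ denotes any single column of $C$.
   Context: A column submatrix consists of a subset of the columns of $C$. For a matrix $X$ with $r$ columns and singular values $\sigma_1(X)\ge\cdots\ge\sigma_r(X)$, the relative volume is $\operatorname{rvol}(X)=\prod_{j=1}^r\sigma_j(X)/\sigma_1(X)$. *)

(* Defs.v *)
From HB Require Import structures.
From mathcomp Require Import all_boot all_order all_algebra.
From mathcomp Require Import reals.
Set Implicit Arguments. Unset Strict Implicit. Unset Printing Implicit Defensive.
Import Order.TTheory GRing.Theory Num.Theory.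
Local Open Scope ring_scope.

Definition is_singular_values (R : realType) (m r : nat)
    (X : 'M[R]_(m, r)) (s : 'I_r -> R) : Prop :=
  (forall i, 0 <= s i) /\
  (forall i j : 'I_r, (i <= j)%N -> s j <= s i) /\
  char_poly (X^T *m X) = \prod_(i < r) ('X - (s i ^+ 2)%:P).

Definition sigma1 (R : realType) (r : nat) (s : 'I_r -> R) : R :=
  \big[Num.max/0]_(i < r) s i.

Definition rvol (R : realType) (r : nat) (s : 'I_r -> R) : R :=
  \prod_(i < r) (s i / sigma1 s).

(* Main.v *)
Require Import Defs.
From HB Require Import structures.
From mathcomp Require Import all_boot all_order all_algebra.
From mathcomp Require Import reals.
From mathcomp Require Import complex.
Import Order.TTheory GRing.Theory Num.Theory.
Local Open Scope ring_scope.
Set Implicit Arguments. Unset Strict Implicit. Unset Printing Implicit Defensive.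

Section Gen.
Variable K : numClosedFieldType.
Local Open Scope sesquilinear_scope.

Definition dotv n (v : 'rV[K]_n) := (v *m v ^t*) 0 0.
Definition quad n (v : 'rV[K]_n) (A : 'M[K]_n) := (v *m A *m v ^t*) 0 0.

Lemma adjM m n p (A : 'M[K]_(m, n)) (B : 'M[K]_(n, p)) :
  (A *m B) ^t* = B ^t* *m A ^t*.
Proof. by rewrite trmx_mul map_mxM. Qed.

Lemma dotvE n (v : 'rV[K]_n) : dotv v = \sum_i v 0 i * (v 0 i)^*.
Proof. by rewrite /dotv mxE; apply: eq_bigr => i _; rewrite !mxE. Qed.

Lemma dotv_ge0 n (v : 'rV[K]_n) : 0 <= dotv v.
Proof. by rewrite dotvE sumr_ge0 // => i _; rewrite mul_conjC_ge0. Qed.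

Lemma dotv_eq0 n (v : 'rV[K]_n) : dotv v = 0 -> v = 0.
Proof.
rewrite dotvE => /eqP; rewrite psumr_eq0 => [/allP H|i _]; last by rewrite mul_conjC_ge0.
apply/rowP => i; rewrite mxE; apply/eqP; rewrite -mul_conjC_eq0.
by apply: (implyP (H i (mem_index_enum _))).
Qed.

Lemma quad_diag n (w : 'rV[K]_n) d :
  quad w (diag_mx d) = \sum_i d 0 i * (w 0 i * (w 0 i)^*).
Proof.
rewrite /quad mxE; apply: eq_bigr => i _.
by rewrite mul_mx_diag !mxE mulrCA mulrA.
Qed.

Lemma spec_dec n (A : 'M[K]_n) : A ^t* = A ->
  exists (P : 'M[K]_n) (d : 'rV[K]_n), [/\ P *m P ^t* = 1%:M, P ^t* *m P = 1%:M &
     A = P ^t* *m diag_mx d *m P].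
Proof.
move=> hA.
have nA : A \is @normalmx _ n by apply/normalmxP; rewrite hA.
have := orthomx_spectralP nA.
have U := spectral_unitarymx A.
rewrite invmx_unitary // => eA.
exists (spectralmx A), (spectral_diag A); split => //.
  exact/unitarymxP.
by rewrite -invmx_unitary // mulVmx // unitarymx_unit.
Qed.


Lemma quad_scale n (v : 'rV[K]_n) A a : v *m A = a *: v -> quad v A = a * dotv v.
Proof. by move=> h; rewrite /quad h -scalemxAl mxE. Qed.

Lemma dotv_row n (P : 'M[K]_n) i : P *m P ^t* = 1%:M -> dotv (row i P) = 1.
Proof.
move=> hP; transitivity ((P *m P ^t*) i i); last by rewrite hP mxE eqxx.
by rewrite /dotv !mxE; apply: eq_bigr => j _; rewrite !mxE.
Qed.

Lemma spec_row n (A : 'M[K]_n) (P : 'M[K]_n) (d : 'rV[K]_n) i :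
  P *m P ^t* = 1%:M -> A = P ^t* *m diag_mx d *m P ->
  row i P *m A = d 0 i *: row i P.
Proof.
move=> hP ->; rewrite -row_mul !mulmxA hP mul1mx row_mul row_diag_mx.
by rewrite -scalemxAl -rowE.
Qed.

Lemma quad_adj n (v : 'rV[K]_n) (P D : 'M[K]_n) :
  quad v (P ^t* *m D *m P) = quad (v *m P ^t*) D.
Proof. by rewrite /quad adjM trmxCK !mulmxA. Qed.

Lemma dotv_adj n (v : 'rV[K]_n) (P : 'M[K]_n) :
  P ^t* *m P = 1%:M -> dotv (v *m P ^t*) = dotv v.
Proof. by move=> hP; rewrite /dotv adjM trmxCK !mulmxA -(mulmxA v) hP mulmx1. Qed.

Lemma rayleigh n (A : 'M[K]_n) (lam : 'I_n -> K) mu :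
  A ^t* = A -> char_poly A = \prod_(i < n) ('X - (lam i)%:P) ->
  (forall i, lam i <= mu) -> forall v, quad v A <= mu * dotv v.
Proof.
move=> hA hc hl v; have [P [d [h1 h2 eA]]] := spec_dec hA.
have hd : forall i, d 0 i <= mu.
  move=> i; have : eigenvalue A (d 0 i).
    apply/eigenvalueP; exists (row i P); first exact: spec_row.
    by apply/eqP => h0; have := dotv_row i h1; rewrite h0 /dotv mul0mx mxE => /eqP; rewrite eq_sym oner_eq0.
  rewrite eigenvalue_root_char hc /root horner_prod => /prodf_eq0 [j _].
  by rewrite hornerXsubC subr_eq0 => /eqP ->.
rewrite eA quad_adj quad_diag -(dotv_adj v h2) dotvE mulr_sumr.
by apply: ler_sum => i _; apply: ler_wpM2r; rewrite ?mul_conjC_ge0.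
Qed.

Lemma det_bound n (A : 'M[K]_n) mu :
  A ^t* = A -> (forall v, 0 <= quad v A) -> (forall v, quad v A <= mu * dotv v) ->
  0 <= \det A /\ \det A <= mu ^+ n.
Proof.
move=> hA h0 hm; have [P [d [h1 h2 eA]]] := spec_dec hA.
have dE : forall i, d 0 i = quad (row i P) A.
  by move=> i; rewrite (quad_scale (spec_row i h1 eA)) dotv_row ?mulr1.
have -> : \det A = \prod_i d 0 i.
  by rewrite eA !det_mulmx det_diag mulrAC -det_mulmx h2 det1 mul1r.
split; first by apply: prodr_ge0 => i _; rewrite dE.
rewrite -[n in mu ^+ n]card_ord -prodr_const; apply: ler_prod => i _.
by rewrite dE h0 /= -[X in _ <= X]mulr1 -(dotv_row i h1) hm.
Qed.


Lemma adj_row m n1 n2 (a : 'M[K]_(m, n1)) (b : 'M[K]_(m, n2)) :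
  (row_mx a b) ^t* = col_mx (a ^t*) (b ^t*).
Proof. by rewrite tr_row_mx map_col_mx. Qed.

Lemma adj0 m n : (0 : 'M[K]_(m, n)) ^t* = 0.
Proof. by apply/matrixP => i j; rewrite !mxE conjC0. Qed.

Lemma adjD m n (a b : 'M[K]_(m, n)) : (a + b) ^t* = a ^t* + b ^t*.
Proof. by apply/matrixP => i j; rewrite !mxE rmorphD. Qed.

Lemma adjN m n (a : 'M[K]_(m, n)) : (- a) ^t* = - a ^t*.
Proof. by apply/matrixP => i j; rewrite !mxE rmorphN. Qed.

Lemma gram_herm m n (X : 'M[K]_(m, n)) : (X ^t* *m X) ^t* = X ^t* *m X.
Proof. by rewrite adjM trmxCK. Qed.

Lemma quad_gram m n (X : 'M[K]_(m, n)) v : quad v (X ^t* *m X) = dotv (v *m X ^t*).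
Proof. by rewrite /quad /dotv adjM trmxCK !mulmxA. Qed.

Lemma dotvD n (a b : 'rV[K]_n) :
  dotv (a + b) = dotv a + dotv b + (a *m b ^t*) 0 0 + (b *m a ^t*) 0 0.
Proof.
rewrite /dotv adjD mulmxDl !mulmxDr !mxE.
by rewrite -!addrA; congr (_ + _); rewrite [RHS]addrC -!addrA; congr (_ + _); rewrite addrC.
Qed.

Lemma dotv_row0 l r (v : 'rV[K]_r) : dotv (row_mx (0 : 'rV_l) v) = dotv v.
Proof. by rewrite /dotv adj_row mul_row_col mul0mx add0r. Qed.

Lemma gram_psd m n (X : 'M[K]_(m, n)) v : 0 <= quad v (X ^t* *m X).
Proof. by rewrite quad_gram dotv_ge0. Qed.

Lemma det_gram_ge0 m n (X : 'M[K]_(m, n)) : 0 <= \det (X ^t* *m X).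
Proof.
have [P [d [h1 h2 eA]]] := spec_dec (gram_herm X).
have dE : forall i, d 0 i = quad (row i P) (X ^t* *m X).
  by move=> i; rewrite (quad_scale (spec_row i h1 eA)) dotv_row ?mulr1.
rewrite eA !det_mulmx det_diag mulrAC -det_mulmx h2 det1 mul1r.
by apply: prodr_ge0 => i _; rewrite dE gram_psd.
Qed.

Lemma schur m l r (A : 'M[K]_(m, l)) (B : 'M[K]_(m, r)) mu :
  (forall u, quad u ((row_mx A B) ^t* *m row_mx A B) <= mu * dotv u) ->
  \det ((row_mx A B) ^t* *m row_mx A B) <= \det (A ^t* *m A) * mu ^+ r.
Proof.
move=> hR.
set Ga := A ^t* *m A.
have Ga_ge0 : 0 <= \det Ga := det_gram_ge0 A.
have [dGa|nGa] := eqVneq (\det Ga) 0.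
  have /det0P [v vn0 vG] : \det Ga == 0 by apply/eqP.
  have vA : v *m A ^t* = 0.
    by apply: dotv_eq0; rewrite -quad_gram /quad /Ga vG mul0mx mxE.
  rewrite dGa mul0r; suff /eqP -> : \det ((row_mx A B) ^t* *m row_mx A B) == 0 by [].
  apply/det0P; exists (row_mx v 0).
    by apply: contra vn0 => /eqP; rewrite -row_mx0 => /eq_row_mx [-> _].
  by rewrite adj_row mulmxA mul_row_col vA mul0mx addr0 mul0mx.
have uGa : Ga \in unitmx by rewrite unitmxE unitfE.
set X := invmx Ga *m (A ^t* *m B).
set B' := B - A *m X.
have h0 : A ^t* *m B' = 0.
  by rewrite /B' mulmxBr mulmxA -/Ga /X mulKVmx // subrr.
have h0' : B' ^t* *m A = 0 by rewrite -[A]trmxCK -adjM h0 adj0.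
set E : 'M[K]_(l + r) := block_mx 1%:M (- X) 0 1%:M.
have DE : row_mx A B *m E = row_mx A B'.
  by rewrite mul_row_block !mulmx1 !mulmx0 addr0 mulmxN addrC.
have dE : \det E = 1 by rewrite det_ublock !det1 mulr1.
have dEt : \det (E ^t*) = 1 by rewrite det_map_mx det_tr dE rmorph1.
have eG : \det ((row_mx A B) ^t* *m row_mx A B) = \det Ga * \det (B' ^t* *m B').
  rewrite -[LHS]mul1r -{1}dEt -[LHS]mulr1 -{1}dE -!det_mulmx.
  rewrite !mulmxA -adjM -mulmxA DE adj_row mul_col_row h0 h0' det_ublock //.
have [_ hS] : 0 <= \det (B' ^t* *m B') /\ \det (B' ^t* *m B') <= mu ^+ r.
  apply: det_bound; first exact: gram_herm; first exact: gram_psd.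
  move=> v; rewrite quad_gram -(dotv_row0 l v).
  apply: le_trans (hR _); rewrite quad_gram adj_row mul_row_col mul0mx add0r.
  have -> : B ^t* = B' ^t* + (A *m X) ^t* by rewrite -adjD /B' subrK.
  rewrite mulmxDr dotvD.
  have c1 : (v *m B' ^t*) *m (v *m (A *m X) ^t*) ^t* = 0.
    by rewrite adjM trmxCK -!mulmxA (mulmxA (B' ^t*)) h0' mul0mx mulmx0.
  have c2 : (v *m (A *m X) ^t*) *m (v *m B' ^t*) ^t* = 0.
    by rewrite !adjM !trmxCK -!mulmxA (mulmxA (A ^t*)) h0 mul0mx !mulmx0.
  by rewrite c1 c2 mxE addr0 addr0 lerDl dotv_ge0.
by rewrite eG ler_wpM2l.
Qed.


Definition sel p n (g : 'I_p -> 'I_n) : 'M[K]_(p, n) := rowsub g 1%:M.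

Lemma sel_adj p n (g : 'I_p -> 'I_n) : (sel g) ^t* = colsub g 1%:M.
Proof. by apply/matrixP => i j; rewrite !mxE conjC_nat eq_sym. Qed.

Lemma colsub_sel m p n (g : 'I_p -> 'I_n) (D : 'M[K]_(m, n)) :
  colsub g D = D *m (sel g) ^t*.
Proof. by rewrite sel_adj mulmx_colsub mulmx1. Qed.

Lemma sel_mul p q n (g : 'I_p -> 'I_n) (g' : 'I_q -> 'I_n) :
  sel g *m (sel g') ^t* = \matrix_(i, j) ((g i == g' j)%:R).
Proof.
rewrite sel_adj mulmx_colsub mulmx1; apply/matrixP => i j; by rewrite !mxE.
Qed.

Lemma sel_unit p n (g : 'I_p -> 'I_n) : injective g -> sel g *m (sel g) ^t* = 1%:M.
Proof.
move=> ig; rewrite sel_mul; apply/matrixP => i j; by rewrite !mxE (inj_eq ig).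
Qed.

Lemma sel_orth p q n (g : 'I_p -> 'I_n) (g' : 'I_q -> 'I_n) :
  (forall i j, g i != g' j) -> sel g *m (sel g') ^t* = 0.
Proof.
move=> h; rewrite sel_mul; apply/matrixP => i j; by rewrite !mxE (negbTE (h i j)).
Qed.

Lemma quad_conj n p (S : 'M[K]_(p, n)) G u :
  quad u (S *m G *m S ^t*) = quad (u *m S) G.
Proof. by rewrite /quad adjM !mulmxA. Qed.

Lemma dotv_conj n p (S : 'M[K]_(p, n)) u :
  S *m S ^t* = 1%:M -> dotv (u *m S) = dotv u.
Proof. by move=> h; rewrite /dotv adjM !mulmxA -(mulmxA u) h mulmx1. Qed.

Lemma gram_conj m n p (S : 'M[K]_(p, n)) (D : 'M[K]_(m, n)) :
  (D *m S ^t*) ^t* *m (D *m S ^t*) = S *m (D ^t* *m D) *m S ^t*.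
Proof. by rewrite adjM trmxCK !mulmxA. Qed.

Lemma compl_ex l r (f : 'I_l -> 'I_(l + r)) : injective f ->
  exists h : 'I_r -> 'I_(l + r), injective h /\ forall i j, f i != h j.
Proof.
move=> fi; set A := ~: [set f x | x in 'I_l].
have cA : r = #|A|.
  have := cardsC [set f x | x in 'I_l]; rewrite card_imset // !card_ord.
  by move=> /eqP; rewrite eqn_add2l => /eqP.
exists (fun j => enum_val (cast_ord cA j)); split.
  by move=> x y /enum_val_inj /cast_ord_inj.
move=> i j; have := enum_valP (cast_ord cA j); rewrite inE.
apply: contra => /eqP <-; exact: imset_f.
Qed.


Lemma main_gen m l r (D : 'M[K]_(m, l + r)) (f : 'I_l -> 'I_(l + r))
    (lam : 'I_(l + r) -> K) mu :
  injective f -> char_poly (D ^t* *m D) = \prod_i ('X - (lam i)%:P) ->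
  (forall i, lam i <= mu) ->
  \det (D ^t* *m D) <= \det ((colsub f D) ^t* *m colsub f D) * mu ^+ r /\
  (forall t, root (char_poly ((colsub f D) ^t* *m colsub f D)) t -> t <= mu).
Proof.
move=> fi hc hl.
have hR := rayleigh (gram_herm D) hc hl.
split; last first.
  move=> t; rewrite -eigenvalue_root_char => /eigenvalueP [v hv vn0].
  have := hR (v *m sel f).
  rewrite -quad_conj -gram_conj -colsub_sel (quad_scale hv) dotv_conj ?sel_unit //.
  have dp : 0 < dotv v.
    by rewrite lt_def dotv_ge0 andbT; apply/eqP => /dotv_eq0 /eqP; rewrite (negbTE vn0).
  by rewrite ler_pM2r.
have [h [hi hd]] := compl_ex fi.
set T : 'M[K]_(l + r) := col_mx (sel f) (sel h).
have TT : T *m T ^t* = 1%:M.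
  rewrite /T tr_col_mx map_row_mx mul_col_row !sel_unit // !sel_orth //.
    by rewrite -scalar_mx_block.
  by move=> i j; rewrite eq_sym.
have DT : D *m T ^t* = row_mx (colsub f D) (colsub h D).
  by rewrite /T tr_col_mx map_row_mx mul_mx_row -!colsub_sel.
have := @schur _ _ _ (colsub f D) (colsub h D) mu.
rewrite -DT gram_conj.
have -> : \det (T *m (D ^t* *m D) *m T ^t*) = \det (D ^t* *m D).
  by rewrite !det_mulmx mulrAC -det_mulmx TT det1 mul1r.
apply => u; rewrite quad_conj -(dotv_conj u TT); exact: hR.
Qed.

End Gen.

Section Real.
Variable R : realType.
Local Open Scope sesquilinear_scope.
Local Notation rc := (real_complex R).

Lemma conj_rc (x : R) : (rc x)^* = rc x.
Proof. by rewrite conj_Creal // complex_real. Qed.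

Lemma transfer m l r (C : 'M[R]_(m, l + r)) (f : 'I_l -> 'I_(l + r))
    (s : 'I_(l + r) -> R) (sg : R) :
  injective f -> char_poly (C^T *m C) = \prod_i ('X - (s i ^+ 2)%:P) ->
  (forall i, s i ^+ 2 <= sg ^+ 2) ->
  \det (C^T *m C) <= \det ((colsub f C)^T *m colsub f C) * (sg ^+ 2) ^+ r /\
  (forall t, root (char_poly ((colsub f C)^T *m colsub f C)) t -> t <= sg ^+ 2).
Proof.
move=> fi hc hs.
set D := map_mx rc C.
have hG : forall p (X : 'M[R]_(m, p)), (map_mx rc X) ^t* *m map_mx rc X = map_mx rc (X^T *m X).
  move=> p X; rewrite map_mxM map_trmx; congr (_ *m _).
  by apply/matrixP => i j; rewrite !mxE conj_rc.
have hF : colsub f D = map_mx rc (colsub f C) by apply/matrixP => i j; rewrite !mxE.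
have := @main_gen _ m l r D f (fun i => rc (s i ^+ 2)) (rc (sg ^+ 2)) fi.
rewrite hF !hG -!map_char_poly hc rmorph_prod.
have -> : \prod_i map_poly rc ('X - (s i ^+ 2)%:P) = \prod_i ('X - (rc (s i ^+ 2))%:P).
  by apply: eq_bigr => i _; rewrite map_polyXsubC.
case=> // [i|h1 h2]; first by rewrite lecR.
split; first by move: h1; rewrite !det_map_mx -rmorphXn -rmorphM lecR.
by move=> t rt; rewrite -lecR; apply: h2; apply: rmorph_root.
Qed.

End Real.

Lemma det_from_cp (R : comNzRingType) n (G : 'M[R]_n) (c : 'I_n -> R) :
  char_poly G = \prod_i ('X - (c i)%:P) -> \det G = \prod_i c i.
Proof.
move=> hc; have := char_poly_det G; rewrite hc -horner_coef0 horner_prod.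
under eq_bigr do rewrite hornerXsubC sub0r.
by rewrite prodrN card_ord => /(can_inj (signrMK n)).
Qed.

Lemma fin_ineq (R : realFieldType) (P Q s t : R) l r :
  0 < P -> 0 <= Q -> 0 < t -> t <= s -> P ^+ 2 <= Q ^+ 2 * (s ^+ 2) ^+ r ->
  P / s ^+ (l + r) <= Q / t ^+ l.
Proof.
move=> P0 Q0 t0 ts h.
have s0 : 0 < s by apply: lt_le_trans ts.
have hP : P <= Q * s ^+ r.
  rewrite -ler_sqr; last 2 first.
  - by rewrite nnegrE ltW.
  - by rewrite nnegrE mulr_ge0 // exprn_ge0 // ltW.
  by rewrite exprMn -exprM mulnC exprM.
apply: le_trans (_ : Q * s ^+ r / s ^+ (l + r) <= _).
  by apply: ler_wpM2r => //; rewrite invr_ge0 exprn_ge0 // ltW.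
have -> : Q * s ^+ r / s ^+ (l + r) = Q / s ^+ l.
  by rewrite exprD invfM [(s ^+ l)^-1 * _]mulrC mulrA mulfK // expf_neq0 // gt_eqF.
apply: ler_wpM2l => //; rewrite lef_pV2 ?posrE ?exprn_gt0 //.
by rewrite lerXn2r // nnegrE ltW.
Qed.

Unset Implicit Arguments.

Theorem lemma3 (R : realType) (m k l : nat) (C : 'M[R]_(m, k))
    (f : 'I_l -> 'I_k) (j : 'I_k)
    (sC : 'I_k -> R) (sCl : 'I_l -> R) (sC1 : 'I_1 -> R) :
  \rank C = k -> (1 <= l)%N -> (l < k)%N -> injective f ->
  is_singular_values C sC ->
  is_singular_values (colsub f C) sCl ->
  is_singular_values (col j C) sC1 ->
  rvol sC <= rvol sCl /\ rvol sCl <= rvol sC1 /\ rvol sC1 = 1.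
Proof.
move=> rkC l1 lk fi [sC0 [_ sCc]] [sl0 [_ slc]] [s10 [_ s1c]].
have [r ekr] : exists r, k = (l + r)%N by exists (k - l)%N; rewrite subnKC // ltnW.
subst k.
have pr : forall n (x : R), \prod_(i < n) x = x ^+ n.
  by move=> n x; rewrite -[n in x ^+ n]card_ord -prodr_const.
have r1 : rvol sC1 = 1.
  set s := sC1 ord0.
  have hs : sigma1 sC1 = s.
    by rewrite /sigma1 big_ord_recl big_ord0; apply/max_idPl; exact: s10.
  have sn0 : s != 0.
    apply/eqP => s0.
    have := det_from_cp s1c; rewrite det_mx11 big_ord1 -/s s0 expr0n /= mxE.
    move/eqP; rewrite psumr_eq0; last by move=> i _; rewrite !mxE -expr2 sqr_ge0.
    move=> /allP hz.
    have cz : col j C = 0.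
      apply/matrixP => i z; rewrite ord1 !mxE.
      by have := hz i (mem_index_enum _); rewrite !mxE mulf_eq0 orbb => /eqP.
    have rf : row_free C^T by rewrite /row_free mxrank_tr rkC.
    have := mulmx_free_eq0 (delta_mx 0 j : 'rV[R]_(l + r)) rf.
    rewrite -rowE -tr_col cz trmx0 eqxx => /esym/eqP/matrixP/(_ 0 j).
    by rewrite !mxE !eqxx => /eqP; rewrite oner_eq0.
  by rewrite /rvol big_ord_recl big_ord0 mulr1 hs divff.
have i0 : 'I_l := Ordinal l1.
set sg := sigma1 sC; set ta := sigma1 sCl.
have hsC : forall i, sC i <= sg by move=> i; exact: le_bigmax.
have hsl : forall i, sCl i <= ta by move=> i; exact: le_bigmax.
have sg0 : 0 <= sg := le_trans (sC0 (lshift r i0)) (hsC _).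
have ta0 : 0 <= ta := le_trans (sl0 i0) (hsl _).
have sq : forall x y : R, 0 <= x -> 0 <= y -> x <= y -> x ^+ 2 <= y ^+ 2.
  by move=> x y x0 y0 xy; rewrite ler_sqr.
have sq' : forall x y : R, 0 <= x -> 0 <= y -> x ^+ 2 <= y ^+ 2 -> x <= y.
  by move=> x y x0 y0; rewrite ler_sqr.
have [hdet hroot] := transfer fi sCc (fun i => sq _ _ (sC0 i) sg0 (hsC i)).
have sl_le : forall i, sCl i <= sg.
  move=> i; apply: sq' (sl0 i) sg0 _; apply: hroot.
  rewrite slc /root horner_prod; apply/prodf_eq0; exists i => //.
  by rewrite hornerXsubC subrr.
have tasg : ta <= sg by apply: bigmax_le => // i _; exact: sl_le.
have dG := det_from_cp sCc; have dGl := det_from_cp slc.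
rewrite prodrXl in dG; rewrite prodrXl in dGl.
rewrite dG dGl in hdet.
set P := \prod_i sC i in hdet; set Q := \prod_i sCl i in hdet.
have P0 : 0 <= P by apply: prodr_ge0.
have Q0 : 0 <= Q by apply: prodr_ge0.
have rv1 : rvol sC = P / sg ^+ (l + r) by rewrite /rvol prodf_div pr.
have rv2 : rvol sCl = Q / ta ^+ l by rewrite /rvol prodf_div pr.
split; last split => //; last first.
  rewrite r1 /rvol -/ta; apply: prodr_ile1 => i _.
  have [ta_0|ta_n0] := eqVneq ta 0.
    by rewrite ta_0 invr0 mulr0 lexx ler01.
  rewrite divr_ge0 //= ler_pdivrMr ?mul1r //.
  by rewrite lt_def ta_n0 ta0.
rewrite rv1 rv2.
have [->|Pn0] := eqVneq P 0.
  by rewrite mul0r divr_ge0 // exprn_ge0.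
have Pp : 0 < P by rewrite lt_def Pn0 P0.
have Qn0 : Q != 0.
  apply: contraTneq hdet => ->; rewrite expr0n /= mul0r -ltNge.
  by rewrite exprn_gt0.
have tap : 0 < ta.
  have : sCl i0 != 0.
    apply: contra Qn0 => /eqP h0; rewrite /Q; apply/prodf_eq0; exists i0 => //; by rewrite h0.
  move=> hn; apply: lt_le_trans (hsl i0); by rewrite lt_def hn sl0.
exact: fin_ineq.
Qed.
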